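(* Let $m\ge 2$ and $n\ge2$ be integers with $n\geq \lfloor m/2\rfloor+1$. Then $\gamma_{oir2}(P_m\Box K_n)=m(n-1)=\alpha(P_m)\beta(K_n)+\beta(P_m)|V(K_n)|-\min\{\beta(P_m),\beta(K_n)\}$.
   Context: $P_m$ is the path on $m$ vertices and $K_n$ the complete graph on $n$ vertices. $\alpha(F)$ is the independence number and $\beta(F)$ the vertex cover number of a graph $F$. For a graph $G$, a function $f:V(G)\to\mathcal{P}(\{1,2\})$ is an outer-independent 2-rainbow dominating function (OI2RD function) if every vertex $v$ with $f(v)=\emptyset$ satisfies $\bigcup_{u\in N(v)}f(u)=\{1,2\}$ and the set $\{v: f(v)=\emptyset\}$ is independent. The weight of $f$ is $\sum_{v}|f(v)|$ and $\gamma_{oir2}(G)$ is the minimum weight of an OI2RD function of $G$. The Cartesian product $G\Box H$ has vertex set $V(G)\times V(H)$, with $(x,y)(x',y')$ an edge iff either $x=x'$ and $yy'\in E(H)$, or $y=y'$ and $xx'\in E(G)$. *)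

(* Defs.v *)
(* A simple graph is a symmetric irreflexive e : rel T on a finType T. *)
From mathcomp Require Import all_boot all_order.
Set Implicit Arguments. Unset Strict Implicit. Unset Printing Implicit Defensive.

Section Graphs.
Variables (T : finType) (e : rel T).

Definition independent (S : {set T}) : bool :=
  [forall x in S, forall y in S, ~~ e x y].

Definition vertex_cover (S : {set T}) : bool :=
  [forall x, forall y, e x y ==> (x \in S) || (y \in S)].

Definition alpha : nat := \max_(S : {set T} | independent S) #|S|.

(* vertex cover number beta (setT is always a cover, so #|T| is a valid default) *)
Definition beta : nat := \big[minn/#|T|]_(S : {set T} | vertex_cover S) #|S|.

(* Outer-independent 2-rainbow dominating function; colours {1,2} are
   represented by 'I_2 = {0,1}. *)
Definition oi2rd (f : {ffun T -> {set 'I_2}}) : bool :=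
  [forall v, (f v == set0) ==> (\bigcup_(u | e v u) f u == [set: 'I_2])]
  && independent [set v | f v == set0].

Definition weight (f : {ffun T -> {set 'I_2}}) : nat := \sum_(v : T) #|f v|.

(* gamma_oir2: minimum weight of an OI2RD function; the default value
   2 * #|T| is the weight of the constant-{1,2} function, which is an OI2RD
   function, so it does not affect the minimum. *)
Definition gamma_oir2 : nat :=
  \big[minn/(2 * #|T|)]_(f : {ffun T -> {set 'I_2}} | oi2rd f) weight f.

End Graphs.

Definition path_rel (m : nat) : rel 'I_m :=
  fun i j => (i.+1 == j :> nat) || (j.+1 == i :> nat).

Definition complete_rel (n : nat) : rel 'I_n := fun i j => i != j.

Definition box_rel (T1 T2 : finType) (e1 : rel T1) (e2 : rel T2) : rel (T1 * T2) :=
  fun p q => ((p.1 == q.1) && e2 p.2 q.2) || ((p.2 == q.2) && e1 p.1 q.1).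
Arguments path_rel m : clear implicits.
Arguments complete_rel n : clear implicits.

(* Main.v *)
Require Import Defs.
From mathcomp Require Import all_boot all_order.
From mathcomp Require Import zify.
Set Implicit Arguments. Unset Strict Implicit. Unset Printing Implicit Defensive.

Lemma bigmin_le (I : finType) (P : pred I) (F : I -> nat) d x :
  P x -> \big[minn/d]_(i | P i) F i <= F x.
Proof.
move=> Px; have: x \in index_enum I by rewrite mem_index_enum.
elim: (index_enum I) => [//|y r IH]; rewrite inE big_cons.
case/orP=> [/eqP<-|xr]; first by rewrite Px geq_minl.
by case: (P y); rewrite ?geq_min IH ?orbT.
Qed.

Lemma bigmin_ge (I : finType) (P : pred I) (F : I -> nat) d v :
  v <= d -> (forall x, P x -> v <= F x) -> v <= \big[minn/d]_(i | P i) F i.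
Proof.
move=> vd H; apply: (big_ind (fun y => v <= y)) => //.
by move=> a b Ha Hb; rewrite leq_min Ha Hb.
Qed.

Lemma L1 (T : finType) k (S : {set T}) (g : nat -> T) :
  {in [pred i | i < k] &, injective g} -> (forall i, i < k -> g i \in S) -> k <= #|S|.
Proof.
move=> inj HS; rewrite cardE.
have -> : k = size (map g (iota 0 k)) by rewrite size_map size_iota.
apply: uniq_leq_size.
  rewrite map_inj_in_uniq ?iota_uniq // => a b; rewrite !mem_iota /= !add0n.
  by move=> Ha Hb; apply: inj.
move=> y /mapP [i]; rewrite mem_iota add0n /= => Hi ->.
by rewrite mem_enum; apply: HS.
Qed.

Lemma L2 (T : finType) k (S : {set T}) (g : T -> nat) :
  {in S &, injective g} -> (forall x, x \in S -> g x < k) -> #|S| <= k.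
Proof.
move=> inj HS; rewrite cardE -(size_map g).
rewrite -[X in _ <= X](size_iota 0 k).
apply: uniq_leq_size.
  by rewrite map_inj_in_uniq ?enum_uniq // => a b; rewrite !mem_enum; apply: inj.
move=> y /mapP [x]; rewrite mem_enum => Hx ->.
by rewrite mem_iota add0n /= HS.
Qed.

Lemma beta_path m : beta (path_rel m.+1) = m.+1 %/ 2.
Proof.
apply/eqP; rewrite eqn_leq; apply/andP; split.
  pose S0 := [set i : 'I_m.+1 | (i : nat) %% 2 == 1].
  have cov : vertex_cover (path_rel m.+1) S0.
    apply/forallP => x; apply/forallP => y; apply/implyP.
    rewrite /path_rel !inE => /orP [] /eqP H; apply/orP; lia.
  apply: leq_trans (bigmin_le _ _ cov) _.
  apply: (L2 (g := fun i : 'I_m.+1 => (i : nat) %/ 2)).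
    move=> a b; rewrite !inE => /eqP Ha /eqP Hb Hab; apply: val_inj => /=; lia.
  move=> x; rewrite inE => /eqP Hx; have := ltn_ord x; lia.
apply: bigmin_ge; first by rewrite card_ord; lia.
move=> S /forallP cov.
pose g := fun k : nat => if (inord (2 * k) : 'I_m.+1) \in S then (inord (2 * k) : 'I_m.+1)
                        else (inord (2 * k + 1) : 'I_m.+1).
have gval : forall k, k < m.+1 %/ 2 -> (g k : nat) %/ 2 = k.
  move=> k Hk; rewrite /g; case: ifP => _; rewrite inordK; lia.
apply: (L1 (g := g)).
  move=> a b; rewrite !inE /= => Ha Hb Hab.
  by rewrite -(gval a Ha) -(gval b Hb) Hab.
move=> k Hk; rewrite /g; case: ifP => // H.
have := cov (inord (2 * k)); move/forallP/(_ (inord (2 * k + 1))).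
rewrite H /= /path_rel !inordK; try lia.
Qed.

Lemma alpha_path m : alpha (path_rel m.+1) = m.+1 - m.+1 %/ 2.
Proof.
apply/eqP; rewrite eqn_leq; apply/andP; split.
  apply/bigmax_leqP => S /forallP ind.
  apply: (L2 (g := fun i : 'I_m.+1 => (i : nat) %/ 2)); last first.
    move=> x _; have := ltn_ord x; lia.
  move=> a b Ha Hb Hab; apply/eqP; apply/negPn/negP => Hne.
  have := ind a; rewrite Ha /= => /forallP /(_ b); rewrite Hb /= /path_rel.
  have : (a : nat) != b by [].
  move=> Hne'; apply/negP/negPn; apply/orP; lia.
pose E := [set i : 'I_m.+1 | (i : nat) %% 2 == 0].
have ind : independent (path_rel m.+1) E.
  apply/forallP => x; apply/implyP; rewrite inE => /eqP Hx.
  apply/forallP => y; apply/implyP; rewrite inE => /eqP Hy.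
  rewrite /path_rel; apply/negP => /orP [] /eqP; lia.
apply: leq_trans (leq_bigmax_cond _ ind).
apply: (L1 (g := fun k => (inord (2 * k) : 'I_m.+1))).
  move=> a b; rewrite !inE /= => Ha Hb /(congr1 val) /=; rewrite !inordK; lia.
move=> k Hk; rewrite inE inordK; lia.
Qed.

Lemma beta_complete n : beta (complete_rel n.+1) = n.
Proof.
apply/eqP; rewrite eqn_leq; apply/andP; split.
  have cov : vertex_cover (complete_rel n.+1) [set~ ord0].
    apply/forallP => x; apply/forallP => y; apply/implyP.
    rewrite /complete_rel !inE => Hxy.
    case: (eqVneq x ord0) => [Ex|]; last by [].
    by rewrite -Ex eq_sym Hxy.
  apply: leq_trans (bigmin_le _ _ cov) _.
  by rewrite cardsC1 card_ord.
apply: bigmin_ge; first by rewrite card_ord.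
move=> S /forallP cov.
have H1 : #|~: S| <= 1.
  apply: (L2 (g := fun _ => 0)) => // a b; rewrite !inE => Ha Hb _.
  apply/eqP; apply/negPn/negP => Hab.
  have := cov a; move/forallP/(_ b); rewrite /complete_rel Hab /=.
  by rewrite (negbTE Ha) (negbTE Hb).
have := cardsC S; rewrite card_ord; lia.
Qed.

Lemma sum_pair m n (F : 'I_m * 'I_n -> nat) :
  \sum_(v : 'I_m * 'I_n) F v = \sum_(i < m) \sum_(j < n) F (i, j).
Proof. by rewrite pair_big; apply: eq_bigr => -[]. Qed.

Lemma sum_neq1 n (k : 'I_n) : \sum_(j < n | j != k) 1 = n - 1.
Proof.
have H : \sum_(j < n) 1 = 1 + \sum_(j < n | j != k) 1 by rewrite (bigD1 k).
move: H; rewrite sum1_card card_ord; lia.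
Qed.

Lemma set1_nz (a : 'I_2) : ([set a] == set0) = false.
Proof. by rewrite -cards_eq0 cards1. Qed.

Lemma gamma_box m n : 2 <= m -> 2 <= n ->
  gamma_oir2 (box_rel (path_rel m) (complete_rel n)) = m * (n - 1).
Proof.
move=> Hm Hn.
pose f0 := [ffun v : 'I_m * 'I_n =>
  if (v.2 : nat) == v.1 %% 2 then set0 else [set (inord (v.1 %% 2) : 'I_2)]].
apply/eqP; rewrite eqn_leq; apply/andP; split.
  have oi : oi2rd (box_rel (path_rel m) (complete_rel n)) f0.
    apply/andP; split.
      apply/forallP => -[i j]; apply/implyP; rewrite ffunE /=.
      case: ifP => [/eqP Hj _|]; last by rewrite set1_nz.
      apply/eqP/setP => c; rewrite inE; apply/bigcupP.
      case: (eqVneq (c : nat) (i %% 2)) => Hc.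
        have Hj' : 1 - i %% 2 < n by lia.
        exists (i, Ordinal Hj').
          rewrite /box_rel /complete_rel /= eqxx /=.
          apply/orP; left; apply/eqP => /(congr1 val) /=; lia.
        rewrite ffunE /=; case: ifP => [/eqP|_]; first lia.
        rewrite inE; apply/eqP/val_inj; rewrite /= inordK; lia.
      have [i' Hi'] : exists i' : 'I_m, (i.+1 == i' :> nat) || (i'.+1 == i :> nat).
        case: (ltnP i.+1 m) => H; first by exists (Ordinal H); rewrite eqxx.
        have H' : i.-1 < m by have := ltn_ord i; lia.
        exists (Ordinal H'); apply/orP; right; apply/eqP => /=; lia.
      exists (i', j).
        by rewrite /box_rel /= eqxx /= /path_rel Hi' orbT.
      have Hc2 : (c : nat) < 2 := ltn_ord c.
      rewrite ffunE /=; case: ifP => [/eqP|_]; first by move: Hi' => /orP [] /eqP; lia.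
      rewrite inE; apply/eqP/val_inj; rewrite /= inordK; move: Hi' => /orP [] /eqP; lia.
    apply/forallP => -[a b]; apply/implyP; rewrite inE ffunE /=.
    case: ifP => [/eqP Hx _|]; last by rewrite set1_nz.
    apply/forallP => -[c d]; apply/implyP; rewrite inE ffunE /=.
    case: ifP => [/eqP Hy _|]; last by rewrite set1_nz.
    rewrite /box_rel /path_rel /complete_rel /=.
    apply/negP => /orP [/andP [/eqP E1 H2]|/andP [/eqP E2 /orP [] /eqP E3]].
    - by move/negP: H2; apply; apply/eqP/val_inj; rewrite /= Hx Hy E1.
    - move: (congr1 val E2) => /= E2'; lia.
    - move: (congr1 val E2) => /= E2'; lia.
  apply: leq_trans (bigmin_le _ _ oi) _.
  rewrite /weight sum_pair.
  have -> : m * (n - 1) = \sum_(i < m) (n - 1) by rewrite sum_nat_const card_ord.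
  apply: leq_sum => i _.
  have Hk : i %% 2 < n by lia.
  rewrite (bigD1 (Ordinal Hk)) //= ffunE /= eqxx cards0 add0n.
  rewrite -(sum_neq1 (Ordinal Hk)); apply: leq_sum => j Hj.
  rewrite ffunE /=; case: ifP => [/eqP Hj'|_]; last by rewrite cards1.
  by move: Hj => /eqP []; apply/val_inj.
apply: bigmin_ge; first by rewrite card_prod !card_ord; nia.
move=> f /andP [_ /forallP ind].
rewrite /weight sum_pair.
have -> : m * (n - 1) = \sum_(i < m) (n - 1) by rewrite sum_nat_const card_ord.
apply: leq_sum => i _.
have key : forall k : 'I_n, (forall j, j != k -> f (i, j) != set0) ->
    n - 1 <= \sum_(j < n) #|f (i, j)|.
  move=> k Hk; rewrite (bigD1 k) //=; apply: leq_trans (leq_addl _ _).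
  rewrite -(sum_neq1 k); apply: leq_sum => j Hj; rewrite card_gt0; exact: Hk.
case: (pickP (fun j : 'I_n => f (i, j) == set0)) => [k Hk|Hnone].
  apply: (key k) => j Hjk; apply/negP => Hj.
  have := ind (i, k); rewrite inE Hk /= => /forallP /(_ (i, j)).
  by rewrite inE Hj /= /box_rel /complete_rel /= eqxx /= eq_sym Hjk.
have H0 : 0 < n by lia.
by apply: (key (Ordinal H0)) => j _; rewrite Hnone.
Qed.

Theorem mainTheorem5 (m n : nat) :
  2 <= m -> 2 <= n -> m./2 + 1 <= n ->
  gamma_oir2 (box_rel (path_rel m) (complete_rel n)) = m * (n - 1) /\
  m * (n - 1) =
    alpha (path_rel m) * beta (complete_rel n) + beta (path_rel m) * #|'I_n|
    - minn (beta (path_rel m)) (beta (complete_rel n)).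
Proof.
move=> Hm Hn Hh; split; first exact: gamma_box.
case: m Hm Hh => [|m] // Hm Hh; case: n Hn Hh => [|n] // Hn Hh.
rewrite alpha_path beta_path beta_complete card_ord -divn2 in Hh *.
rewrite (minn_idPl _); last lia.
set h := m.+1 %/ 2.
have hm : h <= m.+1 by rewrite /h; lia.
rewrite subn1 /=.
have -> : (m.+1 - h) * n + h * n.+1 = m.+1 * n + h by rewrite mulnS; nia.
by rewrite addnK.
Qed.
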